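(* Let $n\ge2$, $q$ not a root of unity, and let $V_\Lambda$ be the symmetric irreducible representation (Young tableau $l_1=\Lambda>0$, $l_2=\dots=l_n=0$) with crystal-basis generators $\widehat e^{\pm}_i$, $N_1,\dots,N_n$ as in the context. Let $E^{\pm}_i$, $H_i$ be the $sl(n)$ generators $E^{+}_{i}=\widehat e^{+}_{i}\sqrt{(N_i+1)N_{i+1}}$, $E^{-}_{i}=\sqrt{(N_i+1)N_{i+1}}\,\widehat e^{-}_{i}$, $H_i=N_i-N_{i+1}$, and $e^{\pm}_i$, $h_i$ the $sl_q(n)$ generators $e^{+}_{i}=\widehat e^{+}_{i}\sqrt{[N_i+1]_q[N_{i+1}]_q}$, $e^{-}_{i}=\sqrt{[N_i+1]_q[N_{i+1}]_q}\,\widehat e^{-}_{i}$, $h_i=H_i$. Then on $V_\Lambda$ the $sl(n)$ and $sl_q(n)$ generators are related by $$e^{+}_{i}=E^{+}_{i}\sqrt{\frac{[N_i+1]_q[N_{i+1}]_q}{(N_i+1)N_{i+1}}},\qquad e^{-}_{i}=\sqrt{\frac{[N_i+1]_q[N_{i+1}]_q}{(N_i+1)N_{i+1}}}\;E^{-}_{i},\qquad h_i=H_i,$$ giving an invertible deforming map between $sl(n)$ and $sl_q(n)$ on the symmetric irreducible representations; for $n=2$ this map coincides with the Curtright–Zachos map.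
   Context: $[x]_q=(q^x-q^{-x})/(q-q^{-1})$. Crystal-basis setting: by Kashiwara, in the limit $q\to0$ of $gl(n)_q$ there are operators $\widehat e^{\pm}_i$ ($i=1,\dots,n-1$) and a basis of each highest-weight irreducible representation labelled by weights, on which $N_i$ act diagonally (eigenvalue $l_i$, the $i$-th row length of the corresponding Young tableau), $\widehat e^{\pm}_i$ shift the weight by $\pm$ the $i$-th row of the Cartan matrix of $sl(n)$ (mapping basis vectors to basis vectors, or to zero at the ends of $i$-strings), and $[N_i,\widehat e^{\pm}_k]=\pm(\delta_{i,k}-\delta_{i-1,k})\widehat e^{\pm}_k$. The Curtright–Zachos map: for $sl(2)$ with generators $j_\pm,j_0$ and $sl_q(2)$ with $J_\pm,J_0$, $J_+=\mathcal Q j_+$, $J_-=j_-\mathcal Q$, $J_0=j_0$, with $\mathcal Q=\sqrt{[J_0+\mathbf J]_q[J_0-\mathbf J-1]_q/((j_0+\mathbf j)(j_0-\mathbf j-1))}$, where $\mathbf j(\mathbf j+1)$ and $[\mathbf J]_q[\mathbf J+1]_q$ are the Casimirs; here $\mathbf j=(N_1+N_2)/2$, $j_0=(N_1-N_2)/2$. The ratios are understood on eigenvalues where the denominators are nonzero. *)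

(* Defs.v *)
From HB Require Import structures.
From mathcomp Require Import all_boot all_order all_algebra.

Import Order.TTheory GRing.Theory Num.Theory.
Local Open Scope ring_scope.

Definition not_root_of_unity (C : numClosedFieldType) (q : C) : Prop :=
  q != 0 /\ forall k : nat, (0 < k)%N -> q ^+ k != 1.

Definition qnum (C : numClosedFieldType) (q : C) (x : int) : C :=
  (q ^ x - q ^ (- x)) / (q - q^-1).

(* Weights of gl(n) modules: occupation numbers (m_0, ..., m_{n-1}) (0-based
   indices; index k here is row k+1 of the paper).  The symmetric irrep V_Lambda
   has basis |m> with sum m = Lambda; vectors are coefficient functions
   v : n.-tuple nat -> C (v = sum_m v(m) |m>) supported on these weights. *)
Definition wocc (n : nat) (m : n.-tuple nat) (k : nat) : nat := nth 0%N m k.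

Definition in_VLambda (C : numClosedFieldType) (n Lam : nat)
  (v : n.-tuple nat -> C) : Prop :=
  forall m : n.-tuple nat, sumn m != Lam -> v m = 0.

Definition wt_shift (n : nat) (m : n.-tuple nat) (a b : nat) : n.-tuple nat :=
  [tuple (nth 0%N m j + (j == a :> nat) - (j == b :> nat))%N | j < n].

Definition opT (C : numClosedFieldType) (n : nat) :=
  (n.-tuple nat -> C) -> (n.-tuple nat -> C).

Definition op_diag (C : numClosedFieldType) (n : nat) (f : n.-tuple nat -> C) : opT C n :=
  fun v m => f m * v m.

(* crystal operators: ehat^+_i |m> = |m + e_i - e_{i+1}> (0 if m_{i+1} = 0),
   ehat^-_i |m> = |m - e_i + e_{i+1}> (0 if m_i = 0). *)
Definition ehat_plus (C : numClosedFieldType) (n i : nat) : opT C n :=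
  fun v m => if (0 < wocc n m i)%N then v (wt_shift n m i.+1 i) else 0.
Definition ehat_minus (C : numClosedFieldType) (n i : nat) : opT C n :=
  fun v m => if (0 < wocc n m i.+1)%N then v (wt_shift n m i i.+1) else 0.

Definition op_comp (C : numClosedFieldType) (n : nat) (A B : opT C n) : opT C n :=
  fun v => A (B v).

Definition sqfac (C : numClosedFieldType) (n i : nat) (m : n.-tuple nat) : C :=
  sqrtC (((wocc n m i).+1 * wocc n m i.+1)%N)%:R.
Definition E_plus (C : numClosedFieldType) (n i : nat) : opT C n :=
  op_comp C n (ehat_plus C n i) (op_diag C n (sqfac C n i)).
Definition E_minus (C : numClosedFieldType) (n i : nat) : opT C n :=
  op_comp C n (op_diag C n (sqfac C n i)) (ehat_minus C n i).
Definition H_op (C : numClosedFieldType) (n i : nat) : opT C n :=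
  op_diag C n (fun m => ((wocc n m i)%:Z - (wocc n m i.+1)%:Z)%:~R).

Definition qsqfac (C : numClosedFieldType) (q : C) (n i : nat) (m : n.-tuple nat) : C :=
  sqrtC (qnum C q (wocc n m i).+1 * qnum C q (wocc n m i.+1)).
Definition e_plus (C : numClosedFieldType) (q : C) (n i : nat) : opT C n :=
  op_comp C n (ehat_plus C n i) (op_diag C n (qsqfac C q n i)).
Definition e_minus (C : numClosedFieldType) (q : C) (n i : nat) : opT C n :=
  op_comp C n (op_diag C n (qsqfac C q n i)) (ehat_minus C n i).
Definition h_op (C : numClosedFieldType) (n i : nat) : opT C n := H_op C n i.

(* deforming factor sqrt([N_i+1]_q [N_{i+1}]_q / ((N_i+1) N_{i+1}))
   (x / 0 = 0 convention; only evaluated where the denominator is nonzero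
   in the theorem) *)
Definition qdef_ratio (C : numClosedFieldType) (q : C) (n i : nat) (m : n.-tuple nat) : C :=
  sqrtC (qnum C q (wocc n m i).+1 * qnum C q (wocc n m i.+1)
         / (((wocc n m i).+1 * wocc n m i.+1)%N)%:R).

(* Curtright-Zachos factor for n = 2: j = (N1+N2)/2, cz_j0 = (N1-N2)/2, J = j,
   J0 = cz_j0; [x]_q is evaluated only at integer rationals x (cz_j0+j, cz_j0-j-1). *)
Definition cz_j (m : 2.-tuple nat) : rat := ((wocc 2 m 0 + wocc 2 m 1)%N)%:R / 2%:R.
Definition cz_j0 (m : 2.-tuple nat) : rat := ((wocc 2 m 0)%:Z - (wocc 2 m 1)%:Z)%:~R / 2%:R.
Definition qnumQ (C : numClosedFieldType) (q : C) (x : rat) : C := qnum C q (numq x).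
Definition CZ_Q (C : numClosedFieldType) (q : C) (m : 2.-tuple nat) : C :=
  sqrtC (qnumQ C q (cz_j0 m + cz_j m) * qnumQ C q (cz_j0 m - cz_j m - 1)
         / ratr ((cz_j0 m + cz_j m) * (cz_j0 m - cz_j m - 1))).

(* Main.v *)
Require Import Defs.
From HB Require Import structures.
From mathcomp Require Import all_boot all_order all_algebra.
From mathcomp Require Import ring lra.
Import Order.TTheory GRing.Theory Num.Theory.
Local Open Scope ring_scope.

Lemma wocc_shift n (m : n.-tuple nat) a b j : (j < n)%N ->
  wocc n (wt_shift n m a b) j = (nth 0%N m j + (j == a) - (j == b))%N.
Proof.
move=> hj; rewrite /wocc /wt_shift.
have := tnth_mktuple (fun j0 : 'I_n => (nth 0%N m j0 + (j0 == a :> nat) - (j0 == b :> nat))%N) (Ordinal hj).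
by rewrite (tnth_nth 0%N) /=.
Qed.

Lemma qpow_ne (C : numClosedFieldType) (q : C) k : not_root_of_unity C q -> (0 < k)%N ->
  q ^+ k - (q ^+ k)^-1 != 0.
Proof.
move=> [q0 hq] k0; apply/negP; rewrite subr_eq0 => /eqP h.
have hk : q ^+ k != 0 by rewrite expf_neq0.
have := hq (k + k)%N; rewrite addn_gt0 k0 /= exprD {2}h divff // eqxx.
by move=> /(_ isT).
Qed.

Lemma qnum_ne (C : numClosedFieldType) (q : C) k : not_root_of_unity C q -> (0 < k)%N ->
  qnum C q k != 0.
Proof.
move=> hq k0; rewrite /qnum -exprnN.
rewrite mulf_neq0 ?invr_eq0 //; first exact: (@qpow_ne C q k hq k0).
by have := @qpow_ne C q 1%N hq isT; rewrite expr1.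
Qed.

Lemma qnumN (C : numClosedFieldType) (q : C) (x : int) : qnum C q (- x) = - qnum C q x.
Proof. by rewrite /qnum opprK -mulNr opprB. Qed.

Lemma key (C : numClosedFieldType) (X : C) (N : nat) : (0 < N)%N ->
  sqrtC X = sqrtC (N%:R) * sqrtC (X / N%:R).
Proof.
move=> N0; rewrite -rootCMl ?ler0n //; congr sqrtC.
by rewrite mulrC divfK // pnatr_eq0 -lt0n.
Qed.

Lemma L1 (C : numClosedFieldType) (q : C) n i (m : n.-tuple nat) :
  (0 < wocc n m i.+1)%N -> qsqfac C q n i m = sqfac C n i m * qdef_ratio C q n i m.
Proof.
move=> h; rewrite /qsqfac /sqfac /qdef_ratio; apply: key.
by rewrite muln_gt0 h.
Qed.

Lemma L2 (C : numClosedFieldType) (q : C) n i (m : n.-tuple nat) :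
  not_root_of_unity C q ->
  (0 < wocc n m i.+1)%N -> qdef_ratio C q n i m != 0.
Proof.
move=> hq h; rewrite /qdef_ratio sqrtC_eq0 mulf_neq0 ?invr_eq0 ?pnatr_eq0 -?lt0n ?muln_gt0 ?h //.
by rewrite mulf_neq0 // qnum_ne.
Qed.

Lemma CZ_eq (C : numClosedFieldType) (q : C) (m : 2.-tuple nat) :
  CZ_Q C q m = sqrtC (qnum C q (wocc 2 m 0) * qnum C q (wocc 2 m 1).+1
                      / ((wocc 2 m 0 * (wocc 2 m 1).+1)%N)%:R).
Proof.
rewrite /CZ_Q /qnumQ.
set a := wocc 2 m 0; set b := wocc 2 m 1.
have e1 : cz_j0 m + cz_j m = (a%:Z)%:~R.
  rewrite /cz_j0 /cz_j -/a -/b intrB -!pmulrn natrD; by field.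
have e2 : cz_j0 m - cz_j m - 1 = (- (b.+1)%:Z)%:~R.
  rewrite /cz_j0 /cz_j -/a -/b intrB intrN -!pmulrn natrD -addn1 natrD; by field.
rewrite e1 e2 !numq_int rmorphM /= !ratr_int qnumN intrN -!pmulrn.
by rewrite !(mulrN, mulNr, invrN) opprK natrM.
Qed.
From Stdlib Require Import FunctionalExtensionality.
From mathcomp Require Import zify.

Theorem mainTheorem2 (C : numClosedFieldType) (q : C) (n Lam : nat) :
  (2 <= n)%N -> (0 < Lam)%N -> not_root_of_unity C q ->
  forall i : nat, (i.+1 < n)%N ->
  forall v : n.-tuple nat -> C, in_VLambda C n Lam v ->
  [/\ e_plus C q n i v = op_comp C n (E_plus C n i) (op_diag C n (qdef_ratio C q n i)) v,
      e_minus C q n i v = op_comp C n (op_diag C n (qdef_ratio C q n i)) (E_minus C n i) v,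
      h_op C n i v = H_op C n i v,
      E_plus C n i v
        = op_comp C n (e_plus C q n i) (op_diag C n (fun m => (qdef_ratio C q n i m)^-1)) v &
      E_minus C n i v
        = op_comp C n (op_diag C n (fun m => (qdef_ratio C q n i m)^-1)) (e_minus C q n i) v] /\
  (forall (e : n = 2%N) (w : 2.-tuple nat -> C),
        w = eq_rect n (fun k => k.-tuple nat -> C) v 2%N e ->
        e_plus C q 2 0 w = op_diag C 2 (CZ_Q C q) (E_plus C 2 0 w) /\
        e_minus C q 2 0 w = E_minus C 2 0 (op_diag C 2 (CZ_Q C q) w)).
Proof.
move=> _ _ hq i hi v _.
have hi0 : (i < n)%N by apply: ltnW.
have Pm : forall m : n.-tuple nat, (0 < wocc n (wt_shift n m i.+1 i) i.+1)%N.
  by move=> m; rewrite wocc_shift // eqxx gtn_eqF //; lia.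
split; first split.
- apply: functional_extensionality => m.
  rewrite /e_plus /E_plus /op_comp /op_diag /ehat_plus.
  case: ifP => h0 //.
  by rewrite L1 ?mulrA.
- apply: functional_extensionality => m.
  rewrite /e_minus /E_minus /op_comp /op_diag /ehat_minus.
  case: ifP => h0; last by rewrite !mulr0.
  by rewrite L1 // mulrA [_ * sqfac _ _ _ _]mulrC.
- by [].
- apply: functional_extensionality => m.
  rewrite /e_plus /E_plus /op_comp /op_diag /ehat_plus.
  case: ifP => h0 //.
  by rewrite L1 // mulrA mulfK // L2.
- apply: functional_extensionality => m.
  rewrite /e_minus /E_minus /op_comp /op_diag /ehat_minus.
  case: ifP => h0; last by rewrite !mulr0.
  by rewrite L1 // [X in _ * (X * _)]mulrC mulrA mulKf // L2.
move=> e w _; split; apply: functional_extensionality => m.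
- rewrite /e_plus /E_plus /op_comp /op_diag /ehat_plus.
  case: ifP => h0; last by rewrite mulr0.
  set m' := wt_shift 2 m 1 0.
  have A : wocc 2 m' 0 = (wocc 2 m 0).-1 by rewrite wocc_shift //; rewrite /wocc; lia.
  have B : wocc 2 m' 1 = (wocc 2 m 1).+1 by rewrite wocc_shift //; rewrite /wocc; lia.
  rewrite L1; last by rewrite B.
  rewrite CZ_eq /qdef_ratio A B prednK //.
  by rewrite mulrA [_ * sqfac _ _ _ _]mulrC.
- rewrite /e_minus /E_minus /op_comp /op_diag /ehat_minus.
  case: ifP => h0; last by rewrite !mulr0.
  set m' := wt_shift 2 m 0 1.
  have A : wocc 2 m' 0 = (wocc 2 m 0).+1 by rewrite wocc_shift //; rewrite /wocc; lia.
  have B : wocc 2 m' 1 = (wocc 2 m 1).-1 by rewrite wocc_shift //; rewrite /wocc; lia.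
  rewrite L1 // CZ_eq /qdef_ratio A B prednK //.
  by rewrite mulrA.
Qed.
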